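(* Consider the setting described in the context. Let $K\in[0,+\infty]$ and let $\zeta$ be a measurable function that is bounded from below on $[0,K]$; set $h=\zeta 1_{[0,K]}$ (restricted to $(0,\infty)$). Let $v>0$, and let $u=-vK/\hat s_0$ if $K<+\infty$, or $u$ be any real number if $K=+\infty$. Put $\hat\theta=\lambda\gamma(1-\rho^2)$, $\omega=W(\hat\theta v\eta^2T)$, $\hat K=K/\hat s_0$ and $\hat\zeta(x)=\zeta(\hat s_0x)$ for $x\ge 0$. Suppose $$\frac{\omega}{\eta^{2}T}+\frac{\omega^2}{2\eta^{2}T}\leq \frac{K}{s_0}\,\hat\theta\, v\, e^{-(\delta-\frac{\eta^2}{2})T}.$$ Then $p_h=D_{\zeta,K}+A_{\zeta,K}$, where $$D_{\zeta,K}=\lambda e^{-rT}u+\frac{e^{-rT}}{\gamma(1-\rho^2)}\left(\frac{\omega}{\eta^2T}+\frac{\omega^2}{2\eta^2T}\right),\qquad A_{\zeta,K}=-\frac{e^{-rT}}{\gamma(1-\rho^2)}\ln I,$$ with $$I=\mathbb{E}\left(\exp\left[-\hat\theta\left(\hat\zeta\left(\frac{\omega}{\hat\theta v\eta^2T}e^{\eta\sqrt{T}N}\right)-u-\frac{\omega}{\hat\theta\eta^2T}e^{\eta\sqrt{T}N}\right)1_{N\leq\frac{\ln\hat K}{\eta\sqrt T}+\frac{\omega}{\eta\sqrt T}}\right]\phi(N)\right),$$ $$\phi(y)=\exp\left(-\frac{\omega}{\eta^2T}\left(e^{\eta\sqrt Ty}-1-\eta\sqrt Ty\right)\right)\exp\left(\left(\frac{\omega}{\eta^2T}e^{\eta\sqrt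 Ty}-\hat\theta v\hat K\right)_+\right)$$ (conventions $\ln(+\infty)=+\infty$, $\ln 0=-\infty$, $(-\infty)_+=0$). Moreover, $V(x_0,s_0,\lambda,h)=V_D\,V_A$, where $$V_D=-\frac1\gamma\exp\left(-\gamma e^{rT}(x_0+D_{\zeta,K})-\frac{(\mu-r)^2}{2\sigma^2}T\right),\qquad V_A=\exp\left(-\gamma e^{rT}A_{\zeta,K}\right).$$
   Context: Fix $T>0$, $r\in\mathbb R$, $\nu,\mu\in\mathbb R$, $\eta>0$, $\sigma>0$, $\rho\in(-1,1)$, $s_0>0$, $\lambda>0$, risk aversion $\gamma>0$ and initial wealth $x_0\in\mathbb R$. Let $N$ be a standard Gaussian random variable. Set $\delta=\nu-\eta\rho\frac{\mu-r}{\sigma}$ and $\hat s_0=s_0e^{(\delta-\frac{\eta^2}{2})T}$. (Model: a non-traded asset $dS_t=S_t(\nu dt+\eta dZ_t)$, a traded asset $dP_t=P_t(\mu dt+\sigma dB_t)$ with $d\langle Z,B\rangle_t=\rho\,dt$, a bond with rate $r$, and an agent with utility $U(x)=-\frac1\gamma e^{-\gamma x}$ receiving $\lambda$ units of $h(S_T)$ at $T$.) For a measurable $h$ bounded from below on $(0,\infty)$, the value function (maximal expected utility) and the asking reservation price are given by $$V(x_0,s_0,\lambda,h)=-\frac1\gamma e^{-\gamma x_0e^{rT}-\frac{(\mu-r)^2}{2\sigma^2}T}\left(\mathbb E\exp\left(-\lambda\gamma(1-\rho^2)h(\hat s_0e^{\eta\sqrt TN})\right)\right)^{\frac1{1-\rho^2}},$$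 $$p_h=-\frac{e^{-rT}}{\gamma(1-\rho^2)}\ln\mathbb E\exp\left(-\lambda\gamma(1-\rho^2)h(\hat s_0e^{\eta\sqrt TN})\right).$$ $W$ denotes the Lambert function, the inverse of $x\in(-1,\infty)\mapsto xe^x\in(-1/e,\infty)$; $x_+=\max(x,0)$. *)

(* Defs.v *)
From HB Require Import structures.
From mathcomp Require Import all_boot all_order all_algebra.
From mathcomp Require Import all_classical all_reals all_analysis.
Set Implicit Arguments. Unset Strict Implicit. Unset Printing Implicit Defensive.
Import Order.TTheory GRing.Theory Num.Theory.
Local Open Scope classical_set_scope.
Local Open Scope ring_scope.

Section Defs.
Variable R : realType.

Definition LambertW (x : R) : R :=
  xget 0 [set w : R | -1 < w /\ w * expR w = x].

Definition gaussE (g : R -> R) : \bar R :=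
  (\int[normal_prob (0:R) 1]_(y in [set: R]) (g y)%:E)%E.

Definition x_pos (x : R) : R := Num.max x 0.

Definition delta_ (nu eta rho mu r sigma : R) : R := nu - eta * rho * (mu - r) / sigma.

Definition shat0 (s0 delta eta T : R) : R := s0 * expR ((delta - eta ^+ 2 / 2) * T).

Definition valueV (T r mu sigma eta rho gamma lambda x0 sh0 : R) (h : R -> R) : R :=
  - gamma^-1 * expR (- gamma * x0 * expR (r * T) - (mu - r) ^+ 2 / (2 * sigma ^+ 2) * T)
  * powR (fine (gaussE (fun y =>
       expR (- lambda * gamma * (1 - rho ^+ 2) * h (sh0 * expR (eta * Num.sqrt T * y))))))
      (1 - rho ^+ 2)^-1.

Definition priceP (T r eta rho gamma lambda sh0 : R) (h : R -> R) : R :=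
  - (expR (- r * T) / (gamma * (1 - rho ^+ 2)))
  * ln (fine (gaussE (fun y =>
       expR (- lambda * gamma * (1 - rho ^+ 2) * h (sh0 * expR (eta * Num.sqrt T * y)))))).

Definition h_trunc (zeta : R -> R) (K : \bar R) (x : R) : R :=
  if (x%:E <= K)%E then zeta x else 0.

(* the event {N <= ln(hatK)/(eta sqrt T) + omega/(eta sqrt T)}, with
   ln(+oo) = +oo, ln 0 = -oo, where hatK = K / hat s0 *)
Definition in_event (K : \bar R) (sh0 eta T omega y : R) : bool :=
  match K with
  | +oo%E => true
  | -oo%E => false
  | k%:E => (0 < k) && (y <= ln (k / sh0) / (eta * Num.sqrt T) + omega / (eta * Num.sqrt T))
  end.

(* (omega/(eta^2 T) e^{eta sqrt T y} - thetahat v hatK)_+ with (-oo)_+ = 0 *)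
Definition pos_part_term (K : \bar R) (sh0 eta T omega thetahat v y : R) : R :=
  match K with
  | k%:E => x_pos (omega / (eta ^+ 2 * T) * expR (eta * Num.sqrt T * y) - thetahat * v * (k / sh0))
  | _ => 0
  end.

End Defs.

(* Main.v *)
Require Import Defs.
From HB Require Import structures.
From mathcomp Require Import all_boot all_order all_algebra.
From mathcomp Require Import all_classical all_reals all_analysis.
From mathcomp Require Import measurable_realfun.
From mathcomp Require Import ring lra.
Import Order.TTheory GRing.Theory Num.Theory numFieldNormedType.Exports.
Local Open Scope classical_set_scope.
Local Open Scope ring_scope.
Local Open Scope ereal_scope.
Import HBNNSimple.

Section density.
Variable R : realType.
Notation mu := (@lebesgue_measure R).
Notation nu := (@normal_prob R 0 1).
Notation p := (@normal_pdf R 0 1).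

Let mp : measurable_fun [set: R] p.
Proof. exact: measurable_normal_pdf. Qed.

Let dens_nnsfun (h : {nnsfun (measurableTypeR R) >-> R}) :
  \int[nu]_x (h x)%:E = \int[mu]_x ((h x)%:E * (p x)%:E).
Proof.
under [LHS]eq_integral do rewrite fimfunE -fsumEFin//.
rewrite [LHS]ge0_integral_fsum//; last 2 first.
  - by move=> r; exact/measurable_EFinP/measurableT_comp.
  - by move=> n x _; rewrite EFinM nnfun_muleindic_ge0.
under [RHS]eq_integral.
  move=> x _; rewrite fimfunE -fsumEFin// ge0_mule_fsuml; last first.
    by move=> r; rewrite EFinM nnfun_muleindic_ge0.
  over.
rewrite [RHS]ge0_integral_fsum//; last 2 first.
  - move=> r; apply: emeasurable_funM.
      by apply/measurable_EFinP; do 2 apply/measurableT_comp => //.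
    by apply/measurable_EFinP.
  - move=> n x _; rewrite mule_ge0//; first by rewrite nnfun_muleindic_ge0.
    by rewrite lee_fin normal_pdf_ge0.
apply: eq_fsbigr => r /[!inE] -[x _ hxr].
have r0 : (0 <= r)%R by rewrite -hxr.
have mA : measurable (h @^-1` [set r]) by exact: measurable_sfunP.
rewrite integralZl_indic_nnsfun// integral_indic// setIT.
under eq_integral do rewrite EFinM -muleA.
rewrite ge0_integralZl//.
- congr (_ * _).
  transitivity (\int[mu]_(x in h @^-1` [set r]) (p x)%:E); first by [].
  rewrite [LHS]integral_mkcond; apply: eq_integral => y _.
  rewrite /patch indicE; case: ifPn => _; first by rewrite mul1e.
  by rewrite mul0e.
- apply: emeasurable_funM; apply/measurable_EFinP => //; try exact: measurable_indic; try exact: measurable_normal_pdf.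
- by move=> y _; rewrite mule_ge0// lee_fin ?indicE// normal_pdf_ge0.
Qed.

Lemma normal_density (f : R -> \bar R) :
  measurable_fun (T:=measurableTypeR R) setT f -> (forall x, 0 <= f x) ->
  \int[nu]_(x in [set: R]) f x = \int[mu]_(x in [set: R]) (f x * (p x)%:E).
Proof.
move=> mf f0.
pose f_ := nnsfun_approx measurableT mf.
transitivity (lim (\int[nu]_x (f_ n x)%:E @[n --> \oo])).
  rewrite -monotone_convergence//=.
  - apply: eq_integral => ? /[!inE] xD; apply/esym/cvg_lim => //=.
    exact: cvg_nnsfun_approx.
  - move=> n; apply/measurable_EFinP; first [exact: measurable_funPT | exact: (measurable_funP (f_ n)) | apply: (measurable_funS measurableT) => //; exact/measurable_funP].
  - by move=> n ? _; rewrite lee_fin.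
  - by move=> x _ a b ab; rewrite lee_fin; exact/lefP/nd_nnsfun_approx.
transitivity (lim (\int[mu]_x ((f_ n x)%:E * (p x)%:E) @[n --> \oo])).
  by apply: congr_lim; apply/funext => n /=; exact: dens_nnsfun.
rewrite -monotone_convergence//=.
- apply: eq_integral => x _; apply/cvg_lim => //.
  apply: cvgeZr => //; exact: cvg_nnsfun_approx.
- move=> n; apply: emeasurable_funM; first exact/measurable_EFinP/measurable_funTS.
  by apply/measurable_EFinP.
- by move=> n x _; rewrite mule_ge0// lee_fin// normal_pdf_ge0.
- move=> x _ a b ab; rewrite lee_wpmul2r ?lee_fin ?normal_pdf_ge0//.
  exact/lefP/nd_nnsfun_approx.
Qed.
End density.

Lemma measurable_shift (R : realType) (t : R) :
  measurable_fun (T:=measurableTypeR R) (U:=measurableTypeR R) setT (fun x : R => x + t)%R.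
Proof. by apply: measurable_funD => //; exact: measurable_id. Qed.

Definition shiftleb (R : realType) (t : R) : set (measurableTypeR R) -> \bar R :=
  pushforward (@lebesgue_measure R) (fun x : R => x + t)%R.

Arguments shiftleb {R}.
Arguments measurable_shift {R}.
Section shiftleb_measure.
Variables (R : realType) (t : R).
Let mf := measurable_shift t.
Let sl0 : shiftleb t set0 = 0.
Proof. by rewrite /shiftleb /pushforward preimage_set0 measure0. Qed.
Let sl_ge0 A : 0 <= shiftleb t A.
Proof. by apply: measure_ge0. Qed.
Let sl_sigma : semi_sigma_additive (shiftleb t).
Proof.
move=> F mF tF mUF; rewrite /shiftleb /pushforward preimage_bigcup.
apply: measure_semi_sigma_additive.
- by move=> n; rewrite -[X in measurable X]setTI; apply: (measurable_shift t).
- apply/trivIsetP => /= i j _ _ ij; rewrite -preimage_setI.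
  by move/trivIsetP : tF => /(_ _ _ _ _ ij) ->//; rewrite preimage_set0.
- by rewrite -preimage_bigcup -[X in measurable X]setTI; by apply: (measurable_shift t).
Qed.
HB.instance Definition _ := isMeasure.Build _ _ _ (shiftleb t) sl0 sl_ge0 sl_sigma.
End shiftleb_measure.

Lemma leb_shift (R : realType) (t : R) (F : R -> \bar R) :
  measurable_fun [set: R] F -> (forall x, 0 <= F x) ->
  \int[@lebesgue_measure R]_x F (x + t)%R = \int[@lebesgue_measure R]_x F x.
Proof.
move=> mF F0.
have nuE : forall A, measurable A -> lebesgue_measure A = shiftleb t A.
  apply: (@lebesgue_measure_unique R (shiftleb t)) => X /ocitvP [->|[[a b] /= ab ->]].
    by rewrite !measure0.
  rewrite /shiftleb /pushforward.
  have -> : (fun x : R => x + t)%R @^-1` `]a, b]%classic = `](a - t)%R, (b - t)%R]%classic.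
    apply/seteqP; split => x /=; rewrite !in_itv /=.
      by rewrite ltrBlDr lerBrDr.
    by rewrite ltrBlDr lerBrDr.
  rewrite !lebesgue_measure_itv /= !lte_fin ltrD2r ab /=.
  by rewrite -!EFinD; congr (_%:E); ring.
rewrite [RHS](eq_measure_integral (shiftleb t)); last by move=> A mA _; exact: nuE.
rewrite [RHS]ge0_integral_pushforward //.
- exact: measurable_shift.
Qed.

Lemma mshift_fun (R : realType) (g : R -> R) (m : R) :
  measurable_fun (T:=measurableTypeR R) setT g ->
  measurable_fun (T:=measurableTypeR R) setT
    (fun y : R => ((g (y - m) * expR (m * y - m ^+ 2 / 2))%R)%:E).
Proof.
move=> mg.
apply/measurable_EFinP; apply: measurable_funM.
  apply: measurableT_comp; [exact: mg | exact: measurable_shift].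
by apply: measurableT_comp => //; apply: measurable_funB => //.
Qed.

Lemma gauss_shift (R : realType) (g : R -> R) (m : R) :
  measurable_fun (T:=measurableTypeR R) setT g -> (forall x, (0 <= g x)%R) ->
  gaussE (fun y => g (y - m) * expR (m * y - m ^+ 2 / 2))%R = gaussE g.
Proof.
move=> mg g0.
rewrite /gaussE normal_density; last 2 first.
- apply/measurable_EFinP; apply: measurable_funM.
    apply: measurableT_comp; [exact: mg | exact: measurable_shift].
  by apply: measurableT_comp => //; apply: measurable_funB => //.
- by move=> x; rewrite lee_fin mulr_ge0 // expR_ge0.
rewrite normal_density; last 2 first.
- exact/measurable_EFinP.
- by move=> x; rewrite lee_fin.
pose H := fun z : R => (g z)%:E * (normal_pdf 0 1 z)%:E.
transitivity (\int[@lebesgue_measure R]_x H (x + - m)%R).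
  apply: eq_integral => y _; rewrite /H -!EFinM; congr (_%:E).
  rewrite /normal_pdf oner_eq0 /= /normal_fun.
  have E : (expR (m * y - m ^+ 2 / 2) * expR (- (y - 0) ^+ 2 / (1 ^+ 2 *+ 2)) =
      expR (- (y - m - 0) ^+ 2 / (1 ^+ 2 *+ 2)))%R.
    by rewrite -expRD; congr expR; rewrite expr1n; field.
  rewrite -E; ring.
rewrite leb_shift //.
- by apply: emeasurable_funM; apply/measurable_EFinP; [exact: mg | exact: measurable_normal_pdf].
- by move=> x; rewrite /H mule_ge0 // lee_fin ?normal_pdf_ge0.
Qed.
Local Close Scope ereal_scope.
Lemma lambertW_spec (R : realType) (x : R) : 0 < x ->
  0 < LambertW x /\ LambertW x * expR (LambertW x) = x.
Proof.
move=> x0.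
have ex : exists w : R, -1 < w /\ w * expR w = x.
  have [c cI fc] : exists2 c, c \in `[0, x] & (fun w : R => w * expR w) c = x.
    apply: IVT; first exact: ltW.
      have cf : continuous (fun w : R => w * expR w).
        move=> w; apply: cvgM; [exact: cvg_id | exact: continuous_expR].
      exact: continuous_subspaceT.
    rewrite /= mul0r; apply/andP; split.
      by rewrite ge_min; apply/orP; left; exact: ltW.
    rewrite le_max; apply/orP; right.
    rewrite ler_peMr ?ltW //.
    by rewrite expR_gt1.
  exists c; split => //.
  move: cI; rewrite in_itv /= => /andP[c0 _].
  by apply: (lt_le_trans _ c0); rewrite ltrN10.
have [w1 w2] := xgetPex 0 ex.
split => //.
rewrite ltNge; apply/negP => w0.
have : LambertW x * expR (LambertW x) <= 0.
  by rewrite mulr_le0_ge0 // expR_ge0.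
by rewrite /LambertW w2 leNgt x0.
Qed.
Theorem theorem2 (R : realType)
  (T r nu mu eta sigma rho s0 lambda gamma x0 : R)
  (hT : 0 < T) (heta : 0 < eta) (hsigma : 0 < sigma)
  (hrho1 : -1 < rho) (hrho2 : rho < 1) (hs0 : 0 < s0)
  (hlambda : 0 < lambda) (hgamma : 0 < gamma)
  (K : \bar R) (hK : (0 <= K)%E)
  (zeta : R -> R)
  (hzeta_meas : measurable_fun [set x : R | 0 <= x] zeta)
  (hzeta_bdd : exists m : R, forall x : R, 0 <= x -> (x%:E <= K)%E -> m <= zeta x)
  (v u : R) (hv : 0 < v)
  (hu : forall k : R, K = k%:E ->
          u = - (v * k / shat0 s0 (delta_ nu eta rho mu r sigma) eta T)) :
  let delta := delta_ nu eta rho mu r sigma in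
  let sh0 := shat0 s0 delta eta T in
  let h := h_trunc zeta K in
  let thetahat := lambda * gamma * (1 - rho ^+ 2) in
  let omega := LambertW (thetahat * v * eta ^+ 2 * T) in
  let zetahat := fun x : R => zeta (sh0 * x) in
  let c := omega / (eta ^+ 2 * T) + omega ^+ 2 / (2 * eta ^+ 2 * T) in
  (c%:E <= K * (thetahat * v * expR (- ((delta - eta ^+ 2 / 2) * T)) / s0)%:E)%E ->
  let D := lambda * expR (- r * T) * u
           + expR (- r * T) / (gamma * (1 - rho ^+ 2)) * c in
  let phi := fun y : R =>
    expR (- (omega / (eta ^+ 2 * T))
            * (expR (eta * Num.sqrt T * y) - 1 - eta * Num.sqrt T * y))
    * expR (pos_part_term K sh0 eta T omega thetahat v y) in
  let I := fine (gaussE (fun y : R =>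
    expR (- thetahat
            * ((zetahat (omega / (thetahat * v * eta ^+ 2 * T)
                           * expR (eta * Num.sqrt T * y))
                - u
                - omega / (thetahat * eta ^+ 2 * T) * expR (eta * Num.sqrt T * y))
               * (in_event K sh0 eta T omega y)%:R))
    * phi y)) in
  let A := - (expR (- r * T) / (gamma * (1 - rho ^+ 2))) * ln I in
  priceP T r eta rho gamma lambda sh0 h = D + A /\
  valueV T r mu sigma eta rho gamma lambda x0 sh0 h =
    (- gamma^-1 * expR (- gamma * expR (r * T) * (x0 + D)
                        - (mu - r) ^+ 2 / (2 * sigma ^+ 2) * T))
    * expR (- gamma * expR (r * T) * A).
Proof.
move=> delta sh0 h thetahat omega zetahat c Hc D phi I A.
have rho2 : 0 < 1 - rho ^+ 2 by nra.
have th0 : 0 < thetahat by rewrite /thetahat !mulr_gt0.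
have sT0 : 0 < Num.sqrt T by rewrite sqrtr_gt0.
have sT : Num.sqrt T ^+ 2 = T by rewrite sqr_sqrtr // ltW.
have [om0 omE] : 0 < omega /\ omega * expR omega = thetahat * v * eta ^+ 2 * T.
  by apply: lambertW_spec; rewrite !mulr_gt0 // exprn_gt0.
have sh00 : 0 < sh0 by rewrite /sh0 /shat0 mulr_gt0 // expR_gt0.
have c0 : 0 < c.
  rewrite /c addr_gt0 // divr_gt0 // ?exprn_gt0 // ?mulr_gt0 // ?exprn_gt0 //.
have Kcase : K = +oo%E \/ exists k, K = k%:E /\ 0 < k.
  case EK: K => [k| |]; [right | by left | by move: hK; rewrite EK].
  exists k; split => //; move: hK; rewrite EK lee_fin => k0'.
  rewrite lt_neqAle k0' andbT; apply/eqP => kz.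
  by move: Hc; rewrite EK -kz mul0e lee_fin leNgt c0.
pose phiS := fun y : R => sh0 * expR (eta * Num.sqrt T * y).
have phiS0 : forall y, 0 < phiS y by move=> y; rewrite mulr_gt0 // expR_gt0.
have mphiS : measurable_fun (T:=measurableTypeR R) setT phiS.
  apply: measurable_funM => //; apply: measurableT_comp => //.
have mpos : measurable [set x : R | 0 <= x].
  rewrite (_ : [set x : R | 0 <= x] = `[0, +oo[%classic); first exact: measurable_itv.
  by apply/seteqP; split => x /=; rewrite in_itv /= andbT.
have mzphi : measurable_fun (T:=measurableTypeR R) setT (zeta \o phiS).
  apply: (measurable_comp mpos) => //.
  by move=> _ [y _ <-]; exact/ltW.
have hfm : measurable_fun (T:=measurableTypeR R) setT (fun y => h (phiS y)).
  case: Kcase => [Kinf | [k [Kk k0]]].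
  - rewrite /h Kinf /h_trunc.
    under eq_fun do rewrite leey.
    exact: mzphi.
  - rewrite /h Kk /h_trunc.
    under eq_fun do rewrite lee_fin.
    apply: measurable_fun_ifT => //.
    by apply: measurable_fun_ler.
pose g := fun y : R => expR (- lambda * gamma * (1 - rho ^+ 2) * h (phiS y)).
have gm : measurable_fun (T:=measurableTypeR R) setT g.
  by apply: measurableT_comp => //; apply: measurable_funM.
have g0 : forall y, 0 < g y by move=> y; exact: expR_gt0.
have [mm hmm] : exists mm, forall y, mm <= h (phiS y).
  case: hzeta_bdd => m0 hm0; exists (Num.min m0 0) => y.
  rewrite /h /h_trunc; case: ifPn => hle.
    by rewrite ge_min (hm0 _ (ltW (phiS0 y)) hle).
  by rewrite ge_min lexx orbT.
have gub : forall y, g y <= expR (- lambda * gamma * (1 - rho ^+ 2) * mm).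
  move=> y; rewrite ler_expR !mulNr lerN2 ler_wpM2l //.
  exact: (ltW th0).
have Efin : (0 <= gaussE g)%E /\ (gaussE g < +oo)%E.
  split; first by apply: integral_ge0 => y _; rewrite lee_fin ltW.
  apply: (@le_lt_trans _ _ (expR (- lambda * gamma * (1 - rho ^+ 2) * mm))%:E); last exact: ltry.
  rewrite /gaussE.
  set B := expR _.
  have -> : (B%:E = \int[normal_prob (0:R) 1]_(y in [set: R]) (cst B%:E) y)%E.
    rewrite integral_cst // [X in (_ * X)%E](_ : _ = 1%E) ?mule1 //; exact: integral_normal_pdf.
  apply: ge0_le_integral => //.
  - by move=> y _; rewrite lee_fin ltW.
  - exact/measurable_EFinP.
  - by move=> y _; rewrite lee_fin gub.
have N1 : normal_prob (0:R) 1 [set: R] = 1%E by exact: integral_normal_pdf.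
have [Ee [Ee0 EeE]] : exists Ee, 0 < Ee /\ gaussE g = Ee%:E.
  exists (fine (gaussE g)); case: Efin => E0 Eoo.
  have Efn : gaussE g \is a fin_num by rewrite ge0_fin_numE.
  split; last by rewrite fineK.
  rewrite lt_neqAle fine_ge0 // andbT.
  apply/eqP => Ez.
  have h0 : gaussE g = 0%E by rewrite -(fineK Efn) -Ez.
  have habs : (\int[normal_prob (0:R) 1]_(y in [set: R]) `|(g y)%:E| = 0)%E.
    rewrite -h0 /gaussE; apply: eq_integral => y _.
    by rewrite gee0_abs // lee_fin ltW.
  have mgE : measurable_fun (T:=measurableTypeR R) setT (fun y => (g y)%:E) by exact/measurable_EFinP.
  have := (@ae_eq_integral_abs _ _ _ (normal_prob (0:R) 1) _ measurableT (fun y => (g y)%:E) mgE).1 habs.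
  case=> N0 [mN0 N00 sub].
  have : (normal_prob (0:R) 1 [set: R] <= normal_prob (0:R) 1 N0)%E.
    apply: le_measure; rewrite ?inE //.
    move=> y _; apply: sub => /= /(_ Logic.I); rewrite /cst => /eqP; rewrite eqe gt_eqF //.
  by rewrite N1 N00 lee_fin ler10.
pose a := eta * Num.sqrt T.
have a0 : 0 < a by rewrite /a mulr_gt0.
pose m := omega / a.
have aym : forall y, a * (y - m) = a * y - omega.
  by move=> y; rewrite /m; field; rewrite gt_eqF.
have hz : forall y, omega / (thetahat * v * eta ^+ 2 * T) * expR (a * y) = expR (a * (y - m)).
  move=> y; rewrite aym expRD expRN -omE; field.
  by rewrite !gt_eqF ?expR_gt0.
have IE : I = expR (thetahat * u + c) * Ee.
  transitivity (fine (gaussE (fun y : R => expR (thetahat * u + c) * (g (y - m) * expR (m * y - m ^+ 2 / 2))))).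
    rewrite /I; congr (fine (gaussE _)); apply/funext => y.
    rewrite /phi /zetahat /g.
    rewrite -/a hz -/(phiS (y - m)).
    have nz : [&& Num.sqrt T != 0, eta != 0, 1 - rho ^+ 2 != 0, gamma != 0 & lambda != 0].
      by rewrite (gt_eqF sT0) (gt_eqF heta) (gt_eqF rho2) (gt_eqF hgamma) (gt_eqF hlambda).
    case: Kcase => [Kinf | [k [Kk k0]]].
    - have hE : h (phiS (y - m)) = zeta (phiS (y - m)) by rewrite /h Kinf /h_trunc leey.
      rewrite hE Kinf /=.
      move: (expR (a * y)) => X.
      rewrite -!expRD; congr expR.
      rewrite /m /c /thetahat /a.
      move: (Num.sqrt T) sT sT0 nz => s sT' sT0' nz.
      rewrite -sT'.
      by field.
    have hu' : u = - (v * k / sh0) by exact: hu.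
    have ev : in_event K sh0 eta T omega y = (phiS (y - m) <= k).
      rewrite Kk /= k0 /=.
      rewrite [in RHS]/phiS [in RHS]mulrC -[in RHS]ler_pdivlMr //.
      rewrite -[in RHS](lnK (x := k / sh0)) ?posrE ?divr_gt0 // ler_expR.
      by rewrite [in RHS]mulrC -[in RHS]ler_pdivlMr // [in RHS]lerBlDr.
    have e0 : 0 < omega / (eta ^+ 2 * T) by rewrite divr_gt0 // mulr_gt0 // exprn_gt0.
    have keq : omega / (eta ^+ 2 * T) * (k / sh0 * expR omega) = thetahat * v * (k / sh0).
      have -> : omega / (eta ^+ 2 * T) * (k / sh0 * expR omega) = omega * expR omega / (eta ^+ 2 * T) * (k / sh0).
        by field; rewrite (gt_eqF hT) (gt_eqF heta) (gt_eqF sh00).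
      by rewrite omE; field; rewrite (gt_eqF hT) (gt_eqF heta) (gt_eqF sh00).
    have aE : forall y, phiS (y - m) = sh0 * (expR (a * y) / expR omega).
      by move=> z; rewrite /phiS -/a aym expRD expRN.
    case: (boolP (phiS (y - m) <= k)) => hle.
    - have hE : h (phiS (y - m)) = zeta (phiS (y - m)) by rewrite /h Kk /h_trunc lee_fin hle.
      have h1 : expR (a * y) <= k / sh0 * expR omega.
        rewrite -ler_pdivrMr ?expR_gt0 // ler_pdivlMr // mulrC -aE //.
      have pp : pos_part_term K sh0 eta T omega thetahat v y = 0.
        rewrite Kk /= /x_pos; apply/max_idPr; rewrite subr_le0 -keq.
        by rewrite ler_wpM2l // ltW.
      rewrite hE ev hle pp /=.
      move: (expR (a * y)) => X.
      rewrite -!expRD; congr expR.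
      rewrite /m /c /thetahat /a.
      move: (Num.sqrt T) sT sT0 nz => s sT' sT0' nz.
      rewrite -sT'.
      by field.
    - have hE : h (phiS (y - m)) = 0 by rewrite /h Kk /h_trunc lee_fin (negbTE hle).
      have h1 : k / sh0 * expR omega < expR (a * y).
        rewrite -ltr_pdivlMr ?expR_gt0 // ltr_pdivrMr // mulrC -aE //.
        by rewrite ltNge.
      have pp : pos_part_term K sh0 eta T omega thetahat v y
          = omega / (eta ^+ 2 * T) * expR (a * y) - thetahat * v * (k / sh0).
        rewrite Kk /= /x_pos; apply/max_idPl; rewrite subr_ge0 -keq.
        by rewrite ltW // ltr_pM2l.
      rewrite hE ev (negbTE hle) pp /= hu'.
      move: (expR (a * y)) => X.
      rewrite -!expRD; congr expR.
      rewrite /m /c /thetahat /a.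
      move: (Num.sqrt T) sT sT0 nz => s sT' sT0' nz.
      rewrite -sT'.
      by field; case/and5P: nz => -> -> -> -> ->; rewrite (gt_eqF sh00).
  rewrite /gaussE; under eq_integral do rewrite EFinM.
  rewrite ge0_integralZl //.
  have := @gauss_shift R g m gm (fun y => ltW (g0 y)); rewrite /gaussE => ->.
  - by move: EeE; rewrite /gaussE => ->; rewrite -EFinM.
  - exact: mshift_fun.
  - by move=> y _; rewrite lee_fin mulr_ge0 // ?expR_ge0 // ltW.
have GE : gaussE (fun y : R => expR (- lambda * gamma * (1 - rho ^+ 2) * h (sh0 * expR (eta * Num.sqrt T * y)))) = Ee%:E.
  by rewrite -EeE.
have lnI : ln I = thetahat * u + c + ln Ee.
  by rewrite IE lnM ?posrE ?expR_gt0 // expRK.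
have PE : priceP T r eta rho gamma lambda sh0 h = D + A.
  rewrite /priceP GE /= /A lnI /D /thetahat.
  by field; rewrite (gt_eqF hgamma) (gt_eqF rho2).
split => //.
rewrite /valueV GE /= /powR (gt_eqF Ee0).
rewrite -!mulrA -!expRD; congr (_ * expR _).
rewrite /A lnI /D /thetahat (mulNr r T) expRN.
by field; rewrite (gt_eqF hgamma) (gt_eqF rho2) (gt_eqF (expR_gt0 _)) (gt_eqF hsigma).
Qed.
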